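(* Let $G$ be a group and let $k\ge 0$ be an integer. The core quandle $Core(G)$ is $(2k+1)$-stable if and only if every element of $G$ satisfies $g^2=1$; in other words, $G$ is isomorphic to $\bigoplus_{i\in I}\mathbb{Z}_2$ for some (finite or infinite) set $I$.
   Context: The core quandle $Core(G)$ of a group $G$ is the set $G$ with operation $g\rhd h:=hg^{-1}h$. For elements $u_1,\ldots,u_n$ of a rack $X$ write $x\rhd(u_i)_{i=1}^n:=(\cdots((x\rhd u_1)\rhd u_2)\cdots)\rhd u_n$. A stabilizing family of order $n$ for $X$ is a finite family $(u_1,\ldots,u_n)$ of elements of $X$ such that $x\rhd(u_i)_{i=1}^n=x$ for all $x\in X$; $X$ is $n$-stable if it has a stabilizing family of order $n$. *)

(* Defs.v *)
From Stdlib Require Import List.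
Import ListNotations.

Record is_group {G : Type} (mul : G -> G -> G) (one : G) (inv : G -> G) : Prop := {
  grp_assoc : forall x y z, mul x (mul y z) = mul (mul x y) z;
  grp_mul1l : forall x, mul one x = x;
  grp_mul1r : forall x, mul x one = x;
  grp_mulVl : forall x, mul (inv x) x = one;
  grp_mulVr : forall x, mul x (inv x) = one
}.

Definition core_op {G : Type} (mul : G -> G -> G) (inv : G -> G) (g h : G) : G :=
  mul (mul h (inv g)) h.

Definition rack_act_seq {X : Type} (op : X -> X -> X) (x : X) (us : list X) : X :=
  fold_left op us x.

Definition stabilizing_family {X : Type} (op : X -> X -> X) (n : nat) (us : list X) : Prop :=
  length us = n /\ forall x : X, rack_act_seq op x us = x.

Definition n_stable {X : Type} (op : X -> X -> X) (n : nat) : Prop :=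
  exists us : list X, stabilizing_family op n us.

(* Main.v *)
Require Import Defs.
From Stdlib Require Import List Arith.

Theorem mainTheorem2 (G : Type) (mul : G -> G -> G) (one : G) (inv : G -> G)
  (HG : is_group mul one inv) (k : nat) :
  n_stable (core_op mul inv) (2 * k + 1) <-> (forall g : G, mul g g = one).
Proof.
  destruct HG as [As M1l M1r MVl MVr].
  assert (invU : forall a b, mul a b = one -> b = inv a).
  { intros a b H. rewrite <- (M1l b), <- (MVl a), <- As, H, M1r. reflexivity. }
  assert (invinv : forall a, inv (inv a) = a).
  { intros a. symmetry. apply invU. apply MVl. }
  assert (invM : forall a b, inv (mul a b) = mul (inv b) (inv a)).
  { intros a b. symmetry. apply invU.
    rewrite As, <- (As a b), MVr, M1r, MVr. reflexivity. }
  assert (inv1 : inv one = one).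
  { symmetry. apply invU. apply M1l. }
  assert (cancl : forall a b c, mul a b = mul a c -> b = c).
  { intros a b c H. rewrite <- (M1l b), <- (M1l c), <- (MVl a), <- !As, H. reflexivity. }
  split.
  - intros [us [Hlen Hst]].
    assert (L : forall us : list G, exists A B,
      (Nat.even (length us) = true /\ forall x, rack_act_seq (core_op mul inv) x us = mul (mul A x) B)
      \/ (Nat.even (length us) = false /\ forall x, rack_act_seq (core_op mul inv) x us = mul (mul A (inv x)) B)).
    { induction us0 as [|u l [A [B [[He IH]|[He IH]]]]].
      - exists one, one. left. split; [reflexivity|]. intros x. simpl.
        rewrite M1l, M1r. reflexivity.
      - exists (mul A u), (mul u B). right. split.
        + change (Nat.even (S (length l)) = false). rewrite Nat.even_succ, <- Nat.negb_even, He. reflexivity.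
        + intros x. simpl. unfold rack_act_seq in *. simpl. rewrite IH. unfold core_op.
          rewrite !As. reflexivity.
      - exists (mul A (inv u)), (mul (inv u) B). left. split.
        + change (Nat.even (S (length l)) = true). rewrite Nat.even_succ, <- Nat.negb_even, He. reflexivity.
        + intros x. unfold rack_act_seq in *. simpl. rewrite IH. unfold core_op.
          rewrite !invM, !invinv, !As. reflexivity. }
    destruct (L us) as [A [B [[He H]|[He H]]]].
    { rewrite Hlen in He. replace (2*k+1) with (S (2*k)) in He by (rewrite Nat.add_comm; reflexivity).
      rewrite Nat.even_succ, Nat.odd_mul in He. simpl in He. discriminate. }
    assert (F : forall x, mul (mul A (inv x)) B = x).
    { intros x. rewrite <- H. apply Hst. }
    assert (HB : B = inv A).
    { apply invU. specialize (F one). rewrite inv1, M1r in F. exact F. }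
    subst B.
    assert (F2 : forall x, inv x = mul (mul (inv A) x) A).
    { intros x. apply (cancl A). rewrite !As, MVr, M1l.
      rewrite <- (M1r (mul A (inv x))). rewrite <- (MVl A), As, F. reflexivity. }
    assert (comm : forall x y, mul x y = mul y x).
    { intros x y.
      assert (E : inv (mul x y) = mul (inv x) (inv y)).
      { rewrite (F2 (mul x y)), (F2 x), (F2 y). rewrite <- !As. rewrite (As A (inv A)), MVr, M1l. reflexivity. }
      rewrite invM in E.
      rewrite <- (invinv (mul x y)), <- (invinv (mul y x)), invM, (invM y x).
      rewrite E. reflexivity. }
    intros g. specialize (F2 g). rewrite (comm (inv A) g), <- As, MVl, M1r in F2.
    rewrite <- F2 at 2. apply MVr.
  - intros Hsq. exists (repeat one (2*k+1)). split.
    + apply repeat_length.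
    + intros x. unfold rack_act_seq. generalize (2*k+1). intros n.
      induction n as [|n IH]; [reflexivity|]. simpl.
      unfold core_op at 2. rewrite M1l, M1r.
      replace (inv x) with x. exact IH.
      apply invU. apply Hsq.
Qed.
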